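(* Let $k\ge 3$ and $p=2^k$. In the $k$-dimensional Poisson regression model with complete interactions, let $\boldsymbol{\beta}$ have intercept $\beta_0=0$, main effects $\beta_1=\dots=\beta_k=-1$, and all interaction parameters $\beta_{ij},\dots,\beta_{12\dots k}$ equal to $0$. Then the design which assigns equal weights $1/p$ to the $2^k$ settings of the full factorial $\{0,2\}^k$ is locally $D$-optimal at $\boldsymbol{\beta}$ on $\mathcal{X}=[0,\infty)^k$.
   Context: In the $k$-dimensional Poisson regression model with complete interactions, an observation at $\mathbf{x}=(x_1,\dots,x_k)$ is Poisson distributed with mean $\lambda(\mathbf{x})=\exp(\mathbf{f}(\mathbf{x})^\top\boldsymbol{\beta})$, where $\mathbf{f}(\mathbf{x})$ consists of all $2^k$ monomials $\prod_{j\in S}x_j$, $S\subseteq\{1,\dots,k\}$, so that $\mathbf{f}(\mathbf{x})^\top\boldsymbol{\beta}=\beta_0+\sum_j\beta_jx_j+\sum_{i<j}\beta_{ij}x_ix_j+\dots+\beta_{12\dots k}x_1x_2\cdots x_k$. A design $\xi$ is a finite collection of distinct settings $\mathbf{x}_i\in\mathcal{X}$ with weights $w_i\ge0$ summing to $1$; its information matrix is $\mathbf{M}_{\boldsymbol{\beta}}(\xi)=\sum_i w_i\lambda(\mathbf{x}_i)\mathbf{f}(\mathbf{x}_i)\mathbf{f}(\mathbf{x}_i)^\top$. A design is locally $D$-optimal at $\boldsymbol{\beta}$ on $\mathcal{X}$ if it maximizes $\det\mathbf{M}_{\boldsymbol{\beta}}(\xi)$ over all designs on $\mathcal{X}$.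 *)

(* Defs.v *)
From HB Require Import structures.
From mathcomp Require Import all_boot all_order all_algebra.
From mathcomp Require Import all_classical all_reals all_analysis.
Set Implicit Arguments. Unset Strict Implicit. Unset Printing Implicit Defensive.
Import Order.TTheory GRing.Theory Num.Theory.
Local Open Scope ring_scope.

Section PoissonDesign.
Variables (R : realType) (k : nat).

Definition fvec (x : 'rV[R]_k) : 'cV[R]_(#|{set 'I_k}|) :=
  \col_(i < #|{set 'I_k}|) \prod_(j in enum_val i) x ord0 j.

Definition linpred (beta : {set 'I_k} -> R) (x : 'rV[R]_k) : R :=
  \sum_(S : {set 'I_k}) beta S * \prod_(j in S) x ord0 j.

Definition intensity (beta : {set 'I_k} -> R) (x : 'rV[R]_k) : R :=
  expR (linpred beta x).

Definition is_design (X : 'rV[R]_k -> Prop) (I : finType)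
    (x : I -> 'rV[R]_k) (w : I -> R) : Prop :=
  injective x /\ (forall i, X (x i)) /\ (forall i, 0 <= w i) /\ \sum_(i : I) w i = 1.

Definition infoM (beta : {set 'I_k} -> R) (I : finType)
    (x : I -> 'rV[R]_k) (w : I -> R) : 'M[R]_(#|{set 'I_k}|) :=
  \sum_(i : I) (w i * intensity beta (x i)) *: (fvec (x i) *m (fvec (x i))^T).

Definition locally_D_optimal (X : 'rV[R]_k -> Prop) (beta : {set 'I_k} -> R)
    (I : finType) (x : I -> 'rV[R]_k) (w : I -> R) : Prop :=
  is_design X x w /\
  forall (J : finType) (y : J -> 'rV[R]_k) (v : J -> R),
    is_design X y v -> \det (infoM beta y v) <= \det (infoM beta x w).

End PoissonDesign.

(* Main.v *)
Require Import Defs.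
From HB Require Import structures.
From mathcomp Require Import all_boot all_order all_algebra.
From mathcomp Require Import all_classical all_reals all_analysis.
From mathcomp Require Import ring lra.
Import Order.TTheory GRing.Theory Num.Theory.
Local Open Scope ring_scope.

Section Had.
Variable R : realType.

Lemma sum_block_mx (J : finType) m1 m2 n1 n2 (f1 : J -> 'M[R]_(m1,n1))
  (f2 : J -> 'M[R]_(m1,n2)) (f3 : J -> 'M[R]_(m2,n1)) (f4 : J -> 'M[R]_(m2,n2)) :
  \sum_i block_mx (f1 i) (f2 i) (f3 i) (f4 i) =
  block_mx (\sum_i f1 i) (\sum_i f2 i) (\sum_i f3 i) (\sum_i f4 i).
Proof.
rewrite unlock /=; elim: (index_enum J) => [|h t IH] /=.
  by rewrite block_mx0.
by rewrite IH add_block_mx.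
Qed.

Lemma hadamard (J : finType) (c : J -> R) (hc : forall i, 0 <= c i) n
  (u : J -> 'cV[R]_n) :
  \det (\sum_i c i *: (u i *m (u i)^T)) <= \prod_(r < n) \sum_i c i * (u i r 0)^+2.
Proof.
elim: n u => [|n IH] u; first by rewrite det_mx00 big_ord0.
suff H : forall u : J -> 'cV[R]_(1 + n),
  \det (\sum_i c i *: (u i *m (u i)^T)) <= \prod_(r < 1 + n) \sum_i c i * (u i r 0)^+2.
  exact: H.
clear u; move=> u; rewrite big_ord_recl.
set al := fun i => u i ord0 0.
set a := \sum_i c i * (al i)^+2.
have a0 : 0 <= a by apply: sumr_ge0 => i _; rewrite mulr_ge0 ?sqr_ge0.
have [aeq0|apos] := eqVneq a 0.
  have ca : forall i, c i * al i = 0.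
    move=> i; have := aeq0; rewrite /a => /eqP; rewrite psumr_eq0; last first.
      by move=> j _; rewrite mulr_ge0 ?sqr_ge0.
    move=> /allP /(_ i) /=; rewrite mem_index_enum => /(_ isT) /eqP.
    by move/eqP; rewrite mulf_eq0 sqrf_eq0 => /orP[] /eqP ->; rewrite ?mul0r ?mulr0.
  rewrite (expand_det_row _ ord0) big1.
    apply: mulr_ge0 => //; apply: prodr_ge0 => r _.
    by apply: sumr_ge0 => i _; rewrite mulr_ge0 ?sqr_ge0.
  move=> j _; rewrite summxE big1 ?mul0r // => i _.
  rewrite !mxE big_ord1 !mxE mulrA.
  by rewrite -/(al i) ca mul0r.
have apos' : 0 < a by rewrite lt_def apos a0.
pose d := fun i => (dsubmx (u i) : 'cV[R]_n).
set b := \sum_i (c i * al i) *: d i.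
set w := fun i => d i - (al i / a) *: b.
pose E : 'M[R]_(1+n) := block_mx 1%:M 0 (- a^-1 *: b) 1%:M.
have Eu i : E *m u i = col_mx (al i)%:M (w i).
  rewrite -(vsubmxK (u i)) /E mul_block_col.
  have -> : usubmx (u i) = (al i)%:M.
    by rewrite [LHS]mx11_scalar !mxE; congr ((u i _ _)%:M); exact: val_inj.
  rewrite mul1mx mul0mx addr0 mul1mx mul_mx_scalar.
  rewrite scaleNr scalerN scalerA.
  by rewrite /w /d addrC.
have EvE (v : 'cV[R]_(1+n)) : E *m (v *m v^T) *m E^T = (E *m v) *m (E *m v)^T.
  by rewrite trmx_mul !mulmxA.
have wsum : \sum_i (c i * al i) *: w i = 0.
  rewrite /w; under eq_bigr do rewrite scalerBr scalerA.
  rewrite sumrB -scaler_suml.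
  rewrite (eq_bigr (fun i => c i * al i ^+ 2 * a^-1)); last by move=> i _; rewrite /al; ring.
  by rewrite -mulr_suml mulfV ?scale1r ?subrr.
have EA : E *m (\sum_i c i *: (u i *m (u i)^T)) *m E^T =
   block_mx (a%:M) 0 (\sum_i c i *: (w i *m ((al i)%:M)^T))
            (\sum_i c i *: (w i *m (w i)^T)).
  rewrite mulmx_sumr mulmx_suml.
  under eq_bigr do rewrite -scalemxAr -scalemxAl EvE Eu tr_col_mx mul_col_row scale_block_mx.
  rewrite sum_block_mx; congr block_mx.
    rewrite -/a; apply/matrixP => x y; rewrite summxE !mxE.
    under eq_bigr do rewrite !mxE big_ord1 !mxE.
    rewrite !ord1 eqxx /= !mulr1n; apply: eq_bigr => i _; rewrite /al; ring.
  rewrite -[RHS]trmx0 -wsum raddf_sum /=; apply: eq_bigr => i _.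
  by rewrite mul_scalar_mx scalerA linearZ.
have detE : \det E = 1 by rewrite /E det_lblock !det1 mulr1.
have detA : \det (\sum_i c i *: (u i *m (u i)^T)) =
    a * \det (\sum_i c i *: (w i *m (w i)^T)).
  have := congr1 determinant EA.
  rewrite !det_mulmx det_tr detE mul1r mulr1 det_lblock det_mx11 mxE eqxx mulr1n.
  by [].
rewrite detA; apply: (ler_wpM2l a0); apply: le_trans (IH w) _.
apply: ler_prod => r _; apply/andP; split.
  by apply: sumr_ge0 => i _; rewrite mulr_ge0 ?sqr_ge0.
have dE i : d i r 0 = u i (lift ord0 r) 0.
  by rewrite /d mxE; congr (u i _ _); exact: val_inj.
set br := b r 0.
have bE : br = \sum_i c i * al i * d i r 0.
  by rewrite /br /b summxE; apply: eq_bigr => i _; rewrite mxE.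
rewrite (eq_bigr (fun i => c i * (d i r 0)^+2 - (2 * br / a) * (c i * al i * d i r 0)
   + (br/a)^+2 * (c i * al i ^+2))); last by move=> i _; rewrite /w !mxE -/br; ring.
rewrite big_split /= sumrB -!mulr_sumr -bE -/a.
under [X in _ <= X]eq_bigr do rewrite -dE.
have -> : \sum_i c i * d i r 0 ^+ 2 - 2 * br / a * br + (br / a) ^+ 2 * a =
   \sum_i c i * d i r 0 ^+ 2 - br ^+ 2 / a.
  by field.
by rewrite lerBlDr lerDl divr_ge0 ?sqr_ge0 ?ltW.
Qed.
End Had.
Section E1.
Variable R : realType.

Lemma expR_pow_lb (n : nat) (s : R) : (0 < n)%N -> 0 <= 1 + s / n%:R ->
  (1 + s / n%:R) ^+ n <= expR s.
Proof.
move=> n0 h.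
have -> : expR s = expR (s / n%:R) ^+ n.
  by rewrite -expRM_natl mulrC divfK // pnatr_eq0 -lt0n.
apply: lerXn2r => //; last exact: expR_ge1Dx.
by rewrite nnegrE expR_ge0.
Qed.

Lemma h_le1 (t : R) : 0 <= t ->
  expR (- t) * (1 - t/2)^+2 + expR (- t) * (t/2)^+2 / expR (-2) <= 1.
Proof.
move=> t0.
set E := (expR 2 : R).
have E5 : 5 <= E.
  have H := @expR_pow_lb 4 2 isT.
  have h1 : (0:R) <= 1 + 2 / 4%:R by lra.
  apply: le_trans (H h1); rewrite !exprS expr0; lra.
have E10 : E <= 10.
  have H := @expR_pow_lb 16 (-2) isT.
  have h1 : (0:R) <= 1 + (-2) / 16%:R by lra.
  have H2 := H h1.
  have Ep : 0 < E by exact: expR_gt0.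
  rewrite expRN -/E in H2.
  have : ((1 + -2 / 16%:R) ^+ 16) * E <= 1.
    by move: H2 => /(ler_wpM2r (ltW Ep)); rewrite mulVf ?lt0r_neq0.
  rewrite !exprS expr0; lra.
rewrite (expRN 2) invrK -/E.
suff HP : (1 - t/2)^+2 + (t/2)^+2 * E <= expR t.
  have : expR (- t) * ((1 - t/2)^+2 + (t/2)^+2 * E) <= expR (- t) * expR t.
    by apply: ler_wpM2l => //; exact: expR_ge0.
  rewrite -expRD addNr expR0 => H; apply: le_trans H; rewrite mulrDr mulrA.
  by [].
have [tl|tg] := lerP t (4/5).
  have h1 : (0:R) <= 1 + t / 4%:R by lra.
  apply: le_trans (@expR_pow_lb 4 t isT h1).
  have : (t/2)^+2 * E <= (t/2)^+2 * 10 by apply: ler_wpM2l => //; exact: sqr_ge0.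
  move=> HE.
  have h2 : 0 <= t * t by nra.
  have h3 : 0 <= t * t * t by nra.
  have h4 : 0 <= t * t * t * t by nra.
  have h5 : t * t <= 4/5 * t by nra.
  rewrite !exprS expr0 in HE *; nra.
have h1 : (0:R) <= 1 + (t - 2) / 4%:R by lra.
have H := @expR_pow_lb 4 (t - 2) isT h1.
have -> : expR t = E * expR (t - 2) by rewrite -expRD addrC subrK.
apply: le_trans (_ : _ <= E * (1 + (t - 2) / 4%:R) ^+ 4) _; last first.
  by apply: ler_wpM2l => //; exact: expR_ge0.
set s := (t - 2) / 2.
have key : 0 <= E * (1/2 + s/2 + s^+2/16) - 1.
  have hs : -3/5 <= s by rewrite /s; lra.
  have q1 : 0 <= E * s^+2 by apply: mulr_ge0; [lra|exact: sqr_ge0].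
  have q2 : 0 <= (E - 5) * (3/10 + s/2) by apply: mulr_ge0; lra.
  nra.
rewrite -subr_ge0.
have -> : E * (1 + (t - 2) / 4%:R) ^+ 4 - ((1 - t / 2) ^+ 2 + (t / 2) ^+ 2 * E) =
   s^+2 * (E * (1/2 + s/2 + s^+2/16) - 1) by rewrite /s; field.
by apply: mulr_ge0 => //; exact: sqr_ge0.
Qed.
End E1.


Section Model.
Variables (R : realType) (k : nat).
Local Notation p := #|{set 'I_k}|.

Lemma sum_sets (F : {set 'I_k} -> R) :
  \sum_(a < p) F (enum_val a) = \sum_S F S.
Proof. by rewrite -big_enum_val; apply: eq_bigl. Qed.

Lemma card_sets : p = (2 ^ k)%N.
Proof. by rewrite -cardsT -powersetT card_powerset cardsT card_ord. Qed.

Definition ell (T : {set 'I_k}) (x : 'rV[R]_k) : R :=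
  \prod_(j < k) (if j \in T then x ord0 j / 2 else 1 - x ord0 j / 2).

Definition Lmat : 'M[R]_p := \matrix_(a < p, s < p)
  (if enum_val a \subset enum_val s then
     \prod_(j in enum_val s) (if j \in enum_val a then 1/2 else -1/2) else 0).

Definition lv (x : 'rV[R]_k) : 'cV[R]_p := \col_a ell (enum_val a) x.

Lemma Lf x : Lmat *m fvec x = lv x.
Proof.
apply/matrixP => a z; rewrite !mxE.
under eq_bigr do rewrite !mxE.
rewrite (sum_sets (fun S => (if enum_val a \subset S then
     \prod_(j in S) (if j \in enum_val a then 1/2 else -1/2) else 0) *
     \prod_(j in S) x ord0 j)).
set T := enum_val a.
rewrite /ell (eq_bigr (fun j => (if j \in T then 1/2 else -1/2) * x ord0 j
     + (if j \in T then 0 else 1))); last first.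
  by move=> j _; case: (j \in T); ring.
rewrite bigA_distr; apply: eq_bigr => S _.
rewrite [RHS](bigID (fun j => j \in S)) /=.
rewrite [in RHS](eq_bigr (fun j => (if j \in T then 1/2 else -1/2) * x ord0 j)); last first.
  by move=> j jS; rewrite jS.
rewrite [in RHS]big_split /=.
rewrite [X in _ = _ * X](eq_bigr (fun j => (if j \in T then 0 else 1))); last first.
  by move=> j /negbTE ->.
case: ifP => [TS|nTS].
  rewrite [X in _ = _ * X]big1 ?mulr1 // => j jS.
  by case: ifP => // jT; move: jS; rewrite (fintype.subsetP TS).
have [j jT jS] : exists2 j, j \in T & j \notin S.
  by move/negbT: nTS => /subsetPn [j jT jS]; exists j.
by rewrite [X in _ = _ * X](bigD1 j) //= jT !(mul0r, mulr0).
Qed.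


Definition xs (T : {set 'I_k}) : 'rV[R]_k := \row_(j < k) (if j \in T then 2 else 0 : R).

Lemma ell_xs T T' : ell T (xs T') = (T == T')%:R.
Proof.
rewrite /ell; case: eqP => [<-|ne].
  by apply: big1 => j _; rewrite !mxE; case: (j \in T) => /=; lra.
have : ~~ [forall j, (j \in T) == (j \in T')].
  apply/negP => /forallP h; apply: ne; apply/setP => j; exact/eqP/h.
move=> /forallPn [j hj].
rewrite (bigD1 j) //= !mxE; move: hj.
by case: (j \in T); case: (j \in T') => //= _; rewrite ?mul0r; lra.
Qed.

Definition beta0 (S : {set 'I_k}) : R := if #|S| == 1%N then -1 else 0.

Lemma linpred_eq x : linpred beta0 x = - \sum_j x ord0 j.
Proof.
rewrite /linpred (bigID (fun S : {set 'I_k} => #|S| == 1%N)) /=.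
rewrite [X in _ + X]big1 ?addr0; last first.
  by move=> S /negbTE h; rewrite /beta0 h mul0r.
rewrite (eq_bigr (fun S : {set 'I_k} => - \prod_(j in S) x ord0 j)); last first.
  by move=> S h; rewrite /beta0 h mulN1r.
rewrite big_cards1 -sumrN; apply: eq_bigr => i _.
by rewrite big_set1.
Qed.

Lemma intensity_eq x : intensity beta0 x = \prod_j expR (- x ord0 j).
Proof. by rewrite /intensity linpred_eq -sumrN expR_sum. Qed.

Lemma LML (I : finType) (y : I -> 'rV[R]_k) (v : I -> R) :
  Lmat *m infoM beta0 y v *m Lmat^T =
  \sum_i (v i * intensity beta0 (y i)) *: (lv (y i) *m (lv (y i))^T).
Proof.
rewrite /infoM mulmx_sumr mulmx_suml; apply: eq_bigr => i _.
by rewrite -scalemxAr -scalemxAl -Lf trmx_mul !mulmxA.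
Qed.

Lemma lv_xs T : lv (xs T) = \col_a ((enum_val a == T)%:R).
Proof. by apply/matrixP => a z; rewrite !mxE ell_xs. Qed.

Lemma LML_xs (c : {set 'I_k} -> R) :
  \sum_T c T *: (lv (xs T) *m (lv (xs T))^T) = diag_mx (\row_a c (enum_val a)).
Proof.
apply/matrixP => a b; rewrite summxE !mxE.
rewrite (bigD1 (enum_val a)) //= big1 ?addr0; last first.
  move=> T /negbTE h; rewrite !lv_xs !mxE big_ord1 !mxE.
  by rewrite eq_sym h mul0r mulr0.
rewrite !lv_xs !mxE big_ord1 !mxE eqxx mul1r (inj_eq enum_val_inj) eq_sym.
by case: (a == b); rewrite ?mulr1 ?mulr0.
Qed.


Definition w0 : R := ((2 ^ k)%:R)^-1.

Lemma sens (x : 'rV[R]_k) : (forall j, 0 <= x ord0 j) ->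
  intensity beta0 x * \sum_(a < p) ell (enum_val a) x ^+ 2 /
     (w0 * intensity beta0 (xs (enum_val a))) <= p%:R.
Proof.
move=> x0.
rewrite (sum_sets (fun T => ell T x ^+ 2 / (w0 * intensity beta0 (xs T)))).
rewrite mulr_sumr.
pose B j := expR (- x ord0 j) * (x ord0 j / 2) ^+ 2 / expR (-2).
pose A j := expR (- x ord0 j) * (1 - x ord0 j / 2) ^+ 2.
rewrite (eq_bigr (fun T : {set 'I_k} => (2 ^ k)%:R * \prod_j (if j \in T then B j else A j))); last first.
  move=> T _.
  have hg : \prod_j (if j \in T then B j else A j) =
     (\prod_j expR (- x ord0 j)) * (ell T x) ^+ 2 / intensity beta0 (xs T).
    rewrite /ell intensity_eq -prodrXl -big_split -prodf_div; apply: eq_bigr => j _.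
    rewrite /B /A !mxE; case: (j \in T) => //.
    by rewrite oppr0 expR0 divr1.
  have hI : intensity beta0 (xs T) != 0 by rewrite /intensity expR_eq0.
  rewrite hg intensity_eq /w0; field.
  by rewrite hI pnatr_eq0 expn_eq0.
rewrite -mulr_sumr -bigA_distr card_sets.
rewrite -[X in _ <= X]mulr1; apply: ler_wpM2l => //.
apply: prodr_ile1 => j _; apply/andP; split.
  by rewrite /A /B addr_ge0 // ?divr_ge0 // mulr_ge0 ?expR_ge0 ?sqr_ge0.
change (B j + A j <= 1); rewrite addrC; exact: h_le1.
Qed.

Lemma main_opt : locally_D_optimal (fun x : 'rV[R]_k => forall j, 0 <= x ord0 j)
  beta0 xs (fun _ => w0).
Proof.
have p0 : (0 < p)%N by rewrite card_sets expn_gt0.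
have w0pos : 0 < w0 by rewrite /w0 invr_gt0 ltr0n expn_gt0.
split.
  split; [|split; [|split]].
  - move=> T T' /matrixP h; apply/setP => j; have := h ord0 j; rewrite !mxE.
    by case: (j \in T); case: (j \in T') => //= e; exfalso; lra.
  - by move=> T j; rewrite mxE; case: (j \in T); lra.
  - by move=> _; exact: ltW.
  - by rewrite sumr_const /w0 card_sets -[_ *+ 2 ^ k]mulr_natr mulVf // pnatr_eq0 expn_eq0.

move=> J y v [yinj [yX [v0 v1]]].
set Mx := infoM beta0 xs (fun _ => w0).
set My := infoM beta0 y v.
pose D (a : 'I_p) := w0 * intensity beta0 (xs (enum_val a)).
have Dpos a : 0 < D a by rewrite mulr_gt0 // /intensity expR_gt0.
have hx : \det Lmat ^+ 2 * \det Mx = \prod_(a < p) D a.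
  have H := congr1 determinant (LML _ xs (fun _ => w0)).
  rewrite (LML_xs (fun T => w0 * intensity beta0 (xs T))) det_diag !det_mulmx det_tr in H.
  rewrite (eq_bigr (fun a => (\row_(a0 < p) D a0) 0 a)); last by move=> a _; rewrite mxE.
  by rewrite -H /Mx expr2; ring.
pose c i := v i * intensity beta0 (y i).
have c0 i : 0 <= c i by rewrite mulr_ge0 // /intensity expR_ge0.
pose X (a : 'I_p) := \sum_i c i * ell (enum_val a) (y i) ^+ 2.
have hy : \det Lmat ^+ 2 * \det My <= \prod_a X a.
  have H := congr1 determinant (LML _ y v).
  rewrite !det_mulmx det_tr in H.
  have HH := @hadamard R J c c0 p (fun i => lv (y i)).
  rewrite -/c in H; rewrite /My expr2 (_ : _ * _ * _ = \det Lmat * \det My * \det Lmat); last by ring.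
  rewrite /My H; apply: le_trans HH _; apply: ler_prod => a _.
  apply/andP; split; first by apply: sumr_ge0 => i _; rewrite mulr_ge0 ?sqr_ge0.
  by rewrite /X le_eqVlt; apply/orP; left; apply/eqP; apply: eq_bigr => i _; rewrite mxE.
have XD a : 0 <= X a / D a.
  apply: divr_ge0; last exact: ltW (Dpos a).
  by apply: sumr_ge0 => i _; rewrite mulr_ge0 ?sqr_ge0.
have sumXD : \sum_a X a / D a <= p%:R.
  rewrite /X; under eq_bigr do rewrite mulr_suml.
  rewrite exchange_big /=.
  apply: le_trans (_ : _ <= \sum_i v i * p%:R) _; last by rewrite -mulr_suml v1 mul1r.
  apply: ler_sum => i _.
  have -> : \sum_a c i * ell (enum_val a) (y i) ^+ 2 / D a =
     v i * (intensity beta0 (y i) * \sum_(a < p) ell (enum_val a) (y i) ^+ 2 /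
       (w0 * intensity beta0 (xs (enum_val a)))).
    rewrite mulr_sumr mulr_sumr; apply: eq_bigr => a _; rewrite /c /D; ring.
  by apply: ler_wpM2l => //; apply: sens.
have AG := (@leif_AGM R 'I_p predT (fun a => X a / D a) (fun a _ => XD a)).1.
have e1 : \prod_(i in predT) (X i / D i) = \prod_i (X i / D i) by apply: eq_bigl.
have e2 : \sum_(i in predT) (X i / D i) = \sum_i (X i / D i) by apply: eq_bigl.
have e3 : #|@predT 'I_p| = p by rewrite card_ord.
rewrite e1 e2 e3 in AG.
have pR : 0 < (p%:R : R) by rewrite ltr0n.
have AG' : \prod_i (X i / D i) <= 1.
  apply: le_trans AG _; apply: exprn_ile1.
    by apply: divr_ge0; [apply: sumr_ge0 => a _; exact: XD | exact: ltW].
  by rewrite ler_pdivrMr // mul1r.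
have hX : \prod_a X a <= \prod_a D a.
  have -> : \prod_a X a = \prod_a D a * \prod_a (X a / D a).
    by rewrite -big_split; apply: eq_bigr => a _ /=; rewrite mulrC divfK // gt_eqF.
  rewrite -[Z in _ <= Z]mulr1; apply: ler_wpM2l => //.
  by apply: prodr_ge0 => a _; exact: ltW.
have Lpos : 0 < \det Lmat ^+ 2.
  rewrite lt_def sqr_ge0 andbT expf_neq0 //; apply/negP => /eqP L0.
  have : 0 < \prod_a D a by apply: prodr_gt0 => a _.
  by rewrite -hx L0 expr0n mul0r ltxx.
by rewrite -(ler_pM2l Lpos) hx; exact: le_trans hy hX.
Qed.

End Model.

Theorem theorem4 (R : realType) (k : nat) (hk : (3 <= k)%N) :
  locally_D_optimal
    (* X = [0, oo)^k *)
    (fun x : 'rV[R]_k => forall j, 0 <= x ord0 j)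
    (* beta_0 = 0, beta_j = -1, all interactions 0 *)
    (fun S : {set 'I_k} => if #|S| == 1%N then -1 else 0)
    (* full factorial {0,2}^k, indexed by the subset of coordinates equal to 2 *)
    (fun T : {set 'I_k} => \row_(j < k) (if j \in T then 2 else 0 : R))
    (fun _ : {set 'I_k} => ((2 ^ k)%:R)^-1).
Proof. exact: (@main_opt R k). Qed.
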